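(* For every $n\ge1$, the Möbius function of the priority lattice $\Pi(n)$ satisfies $\mu(\hat0,\hat1)=0$.
   Context: $[n]_0=\{0,\dots,n\}$. A priority forest on $[n]_0$ is a rooted forest with vertex set $[n]_0$ whose component trees $T_0,T_1,\dots$ are increasing (each non-root vertex has a larger label than its parent) and satisfy: for $j<k$ every label of $T_j$ is smaller than every label of $T_k$. The priority lattice $\Pi(n)$ is the set of priority forests on $[n]_0$ ordered by inclusion of edge sets, together with an extra element $\hat1$ declared greater than every priority forest; $\hat0$ is the edgeless forest. *)

(* Defs.v *)
From mathcomp Require Import all_boot all_order all_algebra.
Set Implicit Arguments. Unset Strict Implicit. Unset Printing Implicit Defensive.
Import GRing.Theory.
Local Open Scope ring_scope.

(** Defined by the standard recursion
      mu(x,x) = 1,  mu(x,y) = - sum_{x <= z < y} mu(x,z) for x < y,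
      mu(x,y) = 0 otherwise,
    computed with fuel; fuel #|T|.+1 exceeds the length of every chain. *)
Fixpoint mobius_fuel (T : finType) (P : pred T) (le : rel T) (k : nat)
    (x y : T) : int :=
  match k with
  | 0%N => 0
  | k'.+1 =>
      if x == y then 1
      else if le x y then
        - \sum_(z : T | [&& P z, le x z, le z y & z != y])
            mobius_fuel P le k' x z
      else 0
  end.

Definition mobius (T : finType) (P : pred T) (le : rel T) (x y : T) : int :=
  mobius_fuel P le #|T|.+1 x y.

(** Vertices [n]_0 = {0,...,n} are 'I_n.+1.  A forest is given by its edge set,
    each edge stored as the pair (parent, child). *)
Definition vtx (n : nat) := 'I_n.+1.
Definition edgeset (n : nat) := {set (vtx n * vtx n)}.

Definition adj n (E : edgeset n) : rel (vtx n) :=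
  fun x y => ((x, y) \in E) || ((y, x) \in E).
Definition same_comp n (E : edgeset n) : rel (vtx n) := connect (adj E).

(** E is the edge set of a rooted forest all of whose trees are increasing:
    every vertex has at most one parent, and each parent has a smaller label
    than its child (such a graph is acyclic; roots are the parentless vertices,
    i.e. the minima of the trees). *)
Definition increasing_forest n (E : edgeset n) : bool :=
  [forall p : vtx n, forall c : vtx n, ((p, c) \in E) ==> (p < c)%N] &&
  [forall p : vtx n, forall p' : vtx n, forall c : vtx n,
     ((p, c) \in E) && ((p', c) \in E) ==> (p == p')].

(** Priority condition: the trees can be listed T_0, T_1, ... so that all labels
    of T_j are smaller than all labels of T_k for j < k; i.e. for any two distinct
    components, all labels of one are smaller than all labels of the other. *)
Definition priority_cond n (E : edgeset n) : bool :=
  [forall u : vtx n, forall v : vtx n, forall u' : vtx n, forall v' : vtx n,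
     [&& ~~ same_comp E u v, same_comp E u u', same_comp E v v' & (u < v)%N]
       ==> (u' < v')%N].

Definition priority_forest n (E : edgeset n) : bool :=
  increasing_forest E && priority_cond E.

(** The priority lattice Pi(n): carrier type option (edgeset n), where
    [Some E] is the priority forest with edge set E and [None] is the extra
    top element 1^. *)
Definition Pi_elem n : pred (option (edgeset n)) :=
  fun a => match a with None => true | Some E => priority_forest E end.

Definition Pi_le n : rel (option (edgeset n)) :=
  fun a b => match b with
             | None => true
             | Some F => match a with None => false | Some E => E \subset F end
             end.

Definition Pi_bot n : option (edgeset n) := Some set0.
Definition Pi_top n : option (edgeset n) := None.

(* Main.v *)
Require Import Defs.
From mathcomp Require Import all_boot all_order all_algebra.
From mathcomp Require Import zify.
Import GRing.Theory.
Set Implicit Arguments. Unset Strict Implicit. Unset Printing Implicit Defensive.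
Lemma big_opt (X : finType) (P : pred (option X)) (F : option X -> int) :
 (\sum_(z | P z) F z = (if P None then F None else 0) + \sum_(x | P (Some x)) F (Some x))%R.
Proof.
rewrite (bigID (fun z => z == None)) /=. congr (_ + _)%R.
  case: ifP => HP. 
    by rewrite (big_pred1 None) // => z /=; case: eqP => [->|]; rewrite ?HP ?andbF.
  by rewrite big_pred0 // => z; case: eqP => [->|]; rewrite ?HP ?andbF.
rewrite (reindex_omap Some id) /=.
  by apply: eq_bigl => x; rewrite eqxx !andbT.
by case=> [x|] // /andP[].
Qed.

Definition Q n (F : edgeset n) := priority_forest F.
Definition f n (F : edgeset n) : int :=
  mobius_fuel (@Pi_elem n) (@Pi_le n) #|F|.+1 (Pi_bot n) (Some F).

Lemma fuel_indep n : forall k m (F : edgeset n), #|F| < k -> #|F| < m ->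
  mobius_fuel (@Pi_elem n) (@Pi_le n) k (Pi_bot n) (Some F) =
  mobius_fuel (@Pi_elem n) (@Pi_le n) m (Pi_bot n) (Some F).
Proof.
elim=> [|k IH] [|m] F //= hk hm.
case: eqP => // _; case: ifP => // _.
congr (- _)%R; apply: eq_bigr => -[G|] /and4P [_ _ hz hne] //=.
have hGF : #|G| < #|F|.
  apply: proper_card; rewrite properEneq hz andbT.
  by apply: contraNneq hne => ->.
by apply: IH; apply: leq_trans hGF _.
Qed.

Lemma f_rec n (F : edgeset n) : F != set0 ->
  f F = (- \sum_(G | Q G && (G \proper F)) f G)%R.
Proof.
move=> hF; rewrite {1}/f [mobius_fuel _ _ _.+1 _ _]/=.
have -> : (Pi_bot n == Some F) = false.
  by apply/eqP => -[] /esym/eqP; rewrite (negbTE hF).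
rewrite sub0set; congr (- _)%R.
rewrite big_opt add0r.
rewrite (eq_bigl (fun G => Q G && (G \proper F))); last first.
  move=> G; have E : (Some G == Some F) = (G == F) by apply/eqP/eqP => [[]|->].
  rewrite E /Q properEneq /Pi_elem /Pi_le /Pi_bot sub0set.
  by case: (G \subset F); rewrite ?andbF ?andbT // andbC.
apply: eq_bigr => G /andP[_ hp]; apply: fuel_indep => //; exact: proper_card.
Qed.

Lemma f0 n : f (set0 : edgeset n) = 1%R.
Proof. by rewrite /f /= eqxx. Qed.

Definition pe n : edgeset n := [set e | nat_of_ord e.2 == (nat_of_ord e.1).+1].

Lemma adj_sym n (S : edgeset n) : connect_sym (adj S).
Proof. by apply: sym_connect_sym => x y; rewrite /adj orbC. Qed.

Lemma cut n (S : edgeset n) (u : vtx n) : forall m (v : vtx n), nat_of_ord v = m ->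
  u <= v -> ~~ connect (adj S) u v ->
  exists w x : vtx n, [/\ u <= w, nat_of_ord x = (nat_of_ord w).+1, x <= v,
     connect (adj S) u w & ~~ connect (adj S) u x].
Proof.
elim=> [|m IH] v hv huv hc.
  have : u = v by apply: ord_inj; rewrite /= hv; lia.
  by move=> e; rewrite e connect0 in hc.
case: (eqVneq u v) => [e|neq]; first by rewrite e connect0 in hc.
have hm : m < n.+1 by have := ltn_ord v; rewrite hv; lia.
set v' : vtx n := Ordinal hm.
have huv' : u <= v'.
  have : nat_of_ord u != nat_of_ord v by [].
  rewrite /= hv; lia.
case: (boolP (connect (adj S) u v')) => h.
  by exists v', v; split => //=; rewrite hv.
have [w [x [h1 h2 h3 h4 h5]]] := IH v' erefl huv' h.
exists w, x; split => //; rewrite /= in h3; lia.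
Qed.

Lemma sub_pe_Q n (S : edgeset n) : S \subset pe n -> Q S.
Proof.
move=> hS; apply/andP; split.
  apply/andP; split.
    apply/forallP => p; apply/forallP => c; apply/implyP => h.
    by move: (subsetP hS _ h); rewrite inE /= => /eqP ->.
  apply/forallP => p; apply/forallP => p'; apply/forallP => c.
  apply/implyP => /andP[h h'].
  move: (subsetP hS _ h) (subsetP hS _ h'); rewrite !inE /= => /eqP e /eqP e'.
  apply/eqP; apply: ord_inj; move: e e'; lia.
apply/forallP => u; apply/forallP => v; apply/forallP => u'; apply/forallP => v'.
apply/implyP => /and4P [hnc hu hv huv].
have [w [x [h1 h2 h3 h4 h5]]] := cut erefl (ltnW huv) hnc.
have hwx : (w, x) \notin S.
  apply: contra h5 => hin; apply: connect_trans h4 (connect1 _).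
  by rewrite /adj hin.
have cl : closed (adj S) [pred y : vtx n | y <= w].
  move=> y z; rewrite /adj => /orP [] hin.
    move: (subsetP hS _ hin); rewrite inE /= => /eqP e.
    case: (eqVneq y w) => [eyw|nyw].
      have : z = x by apply: ord_inj; rewrite e h2 eyw.
      by move=> ezx; move: hin; rewrite eyw ezx (negbTE hwx).
    rewrite !inE /= e; have : nat_of_ord y != nat_of_ord w by []. lia.
  move: (subsetP hS _ hin); rewrite inE /= => /eqP e.
  case: (eqVneq z w) => [ezw|nzw].
    have : y = x by apply: ord_inj; rewrite e h2 ezw.
    by move=> eyx; move: hin; rewrite ezw eyx (negbTE hwx).
  rewrite !inE /= e; have : nat_of_ord z != nat_of_ord w by []. lia.
have := closed_connect cl hu; rewrite !inE /= h1 => /esym hu'.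
have := closed_connect cl hv; rewrite !inE /=.
have -> : (v <= w) = false by lia.
move=> /esym /negbT hv'. lia.
Qed.

Definition par n (E : edgeset n) (v : vtx n) : vtx n :=
  if [pick p | (p, v) \in E] is Some p then p else v.

Lemma par_edge n (E : edgeset n) p c : increasing_forest E -> (p, c) \in E -> par E c = p.
Proof.
move=> /andP[_ /forallP H] hpc; rewrite /par; case: pickP => [q hq|h].
  by move: (H q) => /forallP/(_ p)/forallP/(_ c); rewrite hq hpc /= => /eqP.
by rewrite h in hpc.
Qed.

Lemma par_root n (E : edgeset n) v : (forall p, (p, v) \notin E) -> par E v = v.
Proof. by move=> h; rewrite /par; case: pickP => // q hq; move: (h q); rewrite hq. Qed.

Lemma par_dec n (E : edgeset n) v : increasing_forest E -> par E v = v \/ par E v < v.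
Proof.
move=> /andP[/forallP H _]; rewrite /par; case: pickP => [q hq|h]; last by left.
by right; move: (H q) => /forallP/(_ v); rewrite hq.
Qed.

Definition rt n (E : edgeset n) (v : vtx n) := iter n.+1 (par E) v.

Lemma iter_dec n (E : edgeset n) v : increasing_forest E -> forall k,
  par E (iter k (par E) v) = iter k (par E) v \/ iter k (par E) v + k <= v.
Proof.
move=> hE; elim=> [|k [IH|IH]]; first by right; rewrite addn0.
  by left; rewrite iterS IH.
case: (par_dec (iter k (par E) v) hE) => h; first by left; rewrite iterS h.
right; rewrite iterS; lia.
Qed.

Lemma rt_par n (E : edgeset n) v : increasing_forest E -> rt E (par E v) = rt E v.
Proof.
move=> hE; rewrite /rt -iterSr iterS.
case: (iter_dec v hE n.+1) => // h.
have := ltn_ord v; lia.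
Qed.

Lemma rt_conn n (E : edgeset n) x y : increasing_forest E ->
  connect (adj E) x y -> rt E x = rt E y.
Proof.
move=> hE hc.
have cl : closed (adj E) [pred z | rt E z == rt E x].
  move=> y' z; rewrite !inE /adj => /orP [] hin.
    by rewrite -(par_edge hE hin) rt_par.
  by rewrite -(par_edge hE hin) rt_par.
have := closed_connect cl hc; rewrite !inE eqxx => /esym/eqP.
by [].
Qed.

Lemma rt_root n (E : edgeset n) v : (forall p, (p, v) \notin E) -> rt E v = v.
Proof. by move=> h; apply: iter_fix; apply: par_root. Qed.

Lemma has_pe n (E : edgeset n) : priority_forest E -> E != set0 ->
  exists e, e \in E :&: pe n.
Proof.
move=> /andP[hinc hpr] /set0Pn [e0 he0].
case: (arg_minnP (fun e : vtx n * vtx n => nat_of_ord e.2) he0) => -[p c] hpc hmin.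
have {}hpc : (p, c) \in E by []. have {}hmin : forall j, j \in E -> c <= j.2 by move=> j hj; exact: hmin j hj.
case: (eqVneq (nat_of_ord c) (nat_of_ord p).+1) => hc.
  by exists (p, c); rewrite inE hpc inE /= hc.
have hlt : p < c by move: hinc => /andP[/forallP H _]; move: (H p) => /forallP/(_ c); rewrite hpc.
have hm : (nat_of_ord p).+1 < n.+1 by have := ltn_ord c; lia.
set x : vtx n := Ordinal hm.
have rootp : forall q, (q, p) \notin E.
  move=> q; apply/negP => hq; move: (hmin _ hq) => /=; lia.
have rootx : forall q, (q, x) \notin E.
  move=> q; apply/negP => hq; move: (hmin _ hq) => /=; lia.
have hsc : same_comp E p x.
  apply/negPn/negP => hn.
  move: hpr => /forallP/(_ p)/forallP/(_ x)/forallP/(_ c)/forallP/(_ x)/implyP.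
  have hpc' : same_comp E p c by apply: connect1; rewrite /adj hpc.
  rewrite hn hpc' /same_comp connect0 /=.
  have -> : (p < x) = true by rewrite /=; lia.
  move=> /(_ isT) /=; lia.
have := rt_conn hinc hsc; rewrite (rt_root rootp) (rt_root rootx) => e.
by move: (f_equal (@nat_of_ord _) e) => /=; lia.
Qed.

Lemma sum_zero n (S : edgeset n) : Q S -> S != set0 ->
  (\sum_(G | Q G && (G \subset S)) f G = 0)%R.
Proof.
move=> hQ hS; rewrite (bigD1 S) /=; last by rewrite hQ subxx.
rewrite (f_rec hS) [X in (_ + X)%R](eq_bigl (fun G => Q G && (G \proper S))) ?addNr //.
move=> G; rewrite properEneq.
by case: (Q G); case: (G \subset S); case: (G != S).
Qed.

Lemma f_zero n : forall k (F : edgeset n), #|F| < k -> Q F -> ~~ (F \subset pe n) ->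
  f F = 0%R.
Proof.
elim=> // k IH F hk hQ hpe.
have hF : F != set0 by apply: contraNneq hpe => ->; rewrite sub0set.
rewrite (f_rec hF) (bigID (fun G : edgeset n => G \subset pe n)) /=.
rewrite [X in (_ + X)%R]big1 ?addr0; last first.
  move=> G /andP[/andP[hG hp] hn]; apply: IH => //.
  by apply: leq_trans (proper_card hp) _.
rewrite (eq_bigl (fun G => Q G && (G \subset F :&: pe n))); last first.
  move=> G; rewrite subsetI properEneq.
  case: (Q G) => //=; case: (boolP (G \subset pe n)); rewrite ?andbF ?andbT //= => hG.
  case: (eqVneq G F) => [e|] //=; by rewrite -e hG in hpe.
rewrite sum_zero ?oppr0 //; first by apply: sub_pe_Q; apply: subsetIr.
have [e he] := has_pe hQ hF.
by apply/set0Pn; exists e.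
Qed.

Lemma pe_ne0 n : 1 <= n -> pe n != set0.
Proof.
move=> hn; have h0 : 0 < n.+1 by [].
have h1 : 1 < n.+1 by lia.
apply/set0Pn; exists (Ordinal h0, Ordinal h1); by rewrite inE.
Qed.

Lemma card_lt n (G : edgeset n) : #|G| < #|{: option (edgeset n)}|.
Proof.
rewrite card_option ltnS.
apply: leq_trans (max_card G) _.
apply: leq_trans (ltnW (ltn_expl _ (isT : 1 < 2))) _.
rewrite -cardsT -card_powerset; exact: max_card.
Qed.

Theorem corollary5p12 (n : nat) (hn : (1 <= n)%N) :
  mobius (@Pi_elem n) (@Pi_le n) (Pi_bot n) (Pi_top n) = 0%R.
Proof.
rewrite /mobius /=.
rewrite big_opt /= add0r.
rewrite (eq_bigr (fun G => f G)); last first.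
  move=> G _; apply: fuel_indep => //; exact: card_lt.
under eq_bigl => G do rewrite sub0set !andbT.
rewrite (bigID (fun G : edgeset n => G \subset pe n)) /=.
rewrite [X in (_ + X)%R]big1 ?addr0; last first.
  move=> G /andP[hG hp]; apply: (@f_zero n #|G|.+1) => //.
rewrite sum_zero ?oppr0 //; last exact: pe_ne0.
exact: sub_pe_Q.
Qed.
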